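(* Let $(X,f)$ be a dynamical system. If $(X,f)$ is $\Delta$-transitive, then for every $r\in\mathbb{N}$ and every $\mathbf{a}\in\mathbb{N}^r_*$, the system $(X^r,f^{(\mathbf{a})})$ is also $\Delta$-transitive.
   Context: A dynamical system is a pair $(X,f)$ with $X$ a compact metric space and $f:X\to X$ continuous. $\mathbb{N}=\{1,2,\dots\}$; $\mathbb{N}^r_*=\{(n_1,\dots,n_r)\in\mathbb{N}^r: n_1<n_2<\dots<n_r\}$. For a system $(Y,g)$, a point $y$ is a transitive point if its $\omega$-limit set $\omega(y,g)$ equals $Y$. For $\mathbf{a}\in\mathbb{N}^r$, $f^{(\mathbf{a})}=f^{a_1}\times\dots\times f^{a_r}:X^r\to X^r$. $(X,f)$ is $\Delta$-$\mathbf{a}$-transitive if there is $x\in X$ such that $(x,\dots,x)$ is a transitive point of $(X^r,f^{(\mathbf{a})})$; $(X,f)$ is $\Delta$-transitive if it is $\Delta$-$(1,2,\dots,n)$-transitive for every $n\in\mathbb{N}$. (The same notions apply to the system $(X^r,f^{(\mathbf{a})})$ in place of $(X,f)$.) *)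

(* Defs.v *)
From Stdlib Require Import Reals List.
From mathcomp Require Import all_boot.
Set Implicit Arguments. Unset Strict Implicit. Unset Printing Implicit Defensive.

Local Open Scope R_scope.

Definition is_metric (X : Type) (d : X -> X -> R) : Prop :=
  (forall x y, 0 <= d x y) /\
  (forall x y, d x y = 0 <-> x = y) /\
  (forall x y, d x y = d y x) /\
  (forall x y z, d x z <= d x y + d y z).

Definition metric_open (X : Type) (d : X -> X -> R) (U : X -> Prop) : Prop :=
  forall x, U x -> exists eps, 0 < eps /\ forall y, d x y < eps -> U y.

Definition metric_compact (X : Type) (d : X -> X -> R) : Prop :=
  forall (I : Type) (U : I -> X -> Prop),
    (forall i, metric_open d (U i)) ->
    (forall x, exists i, U i x) ->
    exists l : list I, forall x, exists i, List.In i l /\ U i x.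

Definition metric_continuous (X : Type) (d : X -> X -> R) (f : X -> X) : Prop :=
  forall x eps, 0 < eps -> exists delta, 0 < delta /\
    forall y, d x y < delta -> d (f x) (f y) < eps.

Definition dynamical_system (X : Type) (d : X -> X -> R) (f : X -> X) : Prop :=
  is_metric d /\ metric_compact d /\ metric_continuous d f.

Definition omega_limit (Y : Type) (d : Y -> Y -> R) (g : Y -> Y) (y : Y)
  : Y -> Prop :=
  fun z => forall eps, 0 < eps -> forall N : nat,
    exists n : nat, (N <= n)%N /\ d (iter n g y) z < eps.

Definition transitive_point (Y : Type) (d : Y -> Y -> R) (g : Y -> Y) (y : Y)
  : Prop := forall z, omega_limit d g y z.

(* product X^n with the max metric (inducing the product topology) *)
Definition prod_dist (X : Type) (n : nat) (d : X -> X -> R)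
  (x y : 'I_n -> X) : R := \big[Rmax/0]_(i < n) d (x i) (y i).

Definition prod_map (X : Type) (n : nat) (a : 'I_n -> nat) (f : X -> X)
  (x : 'I_n -> X) : 'I_n -> X := fun i => iter (a i) f (x i).

Definition diag (X : Type) (n : nat) (x : X) : 'I_n -> X := fun _ => x.

Definition Delta_a_transitive (X : Type) (d : X -> X -> R) (f : X -> X)
  (n : nat) (a : 'I_n -> nat) : Prop :=
  exists x : X, transitive_point (prod_dist d) (prod_map a f) (@diag X n x).

Definition Delta_transitive (X : Type) (d : X -> X -> R) (f : X -> X) : Prop :=
  forall n : nat, (0 < n)%N ->
    Delta_a_transitive d f (fun i : 'I_n => (nat_of_ord i).+1).

(* Main.v *)
Require Import Defs.
From Stdlib Require Import Reals List Lra Lia Classical ClassicalEpsilon ZArith.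
From mathcomp Require Import all_boot.
From mathcomp Require Import zify.
Set Implicit Arguments. Unset Strict Implicit.
Local Open Scope R_scope.

Lemma prod_dist_lt (X : Type) (d : X -> X -> R) n (x y : 'I_n -> X) eps :
  0 < eps -> (forall i, d (x i) (y i) < eps) -> prod_dist d x y < eps.
Proof.
move=> he H; rewrite /prod_dist.
apply: (big_ind (fun v => v < eps)) => //.
by move=> u v hu hv; apply: Rmax_lub_lt.
Qed.

Lemma big_Rmax_ge (I : eqType) (s : seq I) (F : I -> R) i :
  i \in s -> F i <= \big[Rmax/0]_(j <- s) F j.
Proof.
elim: s => [|x s IH] //; rewrite in_cons big_cons => /orP [/eqP ->|h].
  by apply: Rmax_l.
apply: Rle_trans (IH h) _; apply: Rmax_r.
Qed.

Lemma prod_dist_ge (X : Type) (d : X -> X -> R) n (x y : 'I_n -> X) i :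
  d (x i) (y i) <= prod_dist d x y.
Proof.
rewrite /prod_dist; apply: (big_Rmax_ge (fun j => d (x j) (y j))).
by rewrite mem_index_enum.
Qed.

Lemma iter_prod (X : Type) n (b : 'I_n -> nat) (g : X -> X) m v k :
  iter m (prod_map b g) v k = iter (b k * m) g (v k).
Proof.
elim: m => [|m IH]; first by rewrite muln0.
by rewrite iterS /prod_map IH mulnS iterD.
Qed.

Lemma fin_delta (T : finType) (Q : T -> R -> Prop) :
  (forall k, exists δ, 0 < δ /\ Q k δ) ->
  (forall k δ δ', Q k δ -> 0 < δ' -> δ' <= δ -> Q k δ') ->
  exists δ, 0 < δ /\ forall k, Q k δ.
Proof.
move=> H Hm.
suff: forall s : seq T, exists δ, 0 < δ /\ forall k, k \in s -> Q k δ.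
  move=> /(_ (enum T)) [δ [h1 h2]]; exists δ; split => // k.
  by apply: h2; rewrite mem_enum.
elim=> [|x s [δ [h1 h2]]]; first by exists 1; split => //; lra.
have [δx [h3 h4]] := H x.
exists (Rmin δ δx); split; first by apply: Rmin_glb_lt.
move=> k; rewrite in_cons => /orP [/eqP ->|hk].
  apply: Hm h4 _ _; [by apply: Rmin_glb_lt| apply: Rmin_r].
apply: Hm (h2 _ hk) _ _; [by apply: Rmin_glb_lt| apply: Rmin_l].
Qed.

Lemma iter_cont (X : Type) (d : X -> X -> R) (f : X -> X) k :
  metric_continuous d f -> metric_continuous d (iter k f).
Proof.
move=> Hf; elim: k => [|k IH] x eps he.
  by exists eps; split => // y /=.
have [δ1 [h1 h2]] := Hf (iter k f x) eps he.
have [δ2 [h3 h4]] := IH x δ1 h1.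
exists δ2; split => // y hy; rewrite !iterS; apply: h2; exact: h4.
Qed.

Lemma in_nth (X : Type) (x0 : X) (L : seq X) e :
  List.In e L -> exists k, (k < size L)%N /\ nth x0 L k = e.
Proof.
elim: L => [|x L IH] //= [->|h]; first by exists 0%N.
have [k [h1 h2]] := IH h; by exists k.+1.
Qed.

Lemma foldr_max (I : Type) (F : I -> nat) (l : list I) p :
  List.In p l -> (F p <= foldr (fun q acc => maxn (F q) acc) 0 l)%N.
Proof.
elim: l => [|x l IH] //= [->|h]; first by apply: leq_maxl.
apply: leq_trans (IH h) _; apply: leq_maxr.
Qed.

Lemma complete (X : Type) (d : X -> X -> R) (u : nat -> X) :
  is_metric d -> metric_compact d ->
  (forall ε, 0 < ε -> exists S, forall s t, (S <= s)%N -> (S <= t)%N -> d (u s) (u t) < ε) ->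
  exists L, forall ε, 0 < ε -> exists S, forall s, (S <= s)%N -> d (u s) L < ε.
Proof.
move=> [d0 [dxy [dsym dtri]]] Hc Hcau.
apply: NNPP => Hno.
pose I := {p : X * R * nat | 0 < p.1.2 /\ forall s, (p.2 <= s)%N -> p.1.2 <= d p.1.1 (u s)}.
pose U := fun (p : I) (y : X) => d (sval p).1.1 y < (sval p).1.2.
have Hopen : forall p, metric_open d (U p).
  move=> [[[c e] N] [he hp]] y; rewrite /U /= => hy; exists (e - d c y); split; first lra.
  move=> z; rewrite /U /= => hz; have := dtri c y z; lra.
have Hcov : forall x, exists p, U p x.
  move=> x.
  have [ε [he Hε]] : exists ε, 0 < ε /\ forall S, exists s, (S <= s)%N /\ ε <= d (u s) x.
    apply: NNPP => h; apply: Hno; exists x => ε he; apply: NNPP => h2; apply: h.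
    exists ε; split => // S; apply: NNPP => h3; apply: h2; exists S => s hs.
    apply: Rnot_le_lt => h4; apply: h3; by exists s.
  have [S0 HS0] := Hcau (ε / 2) ltac:(lra).
  have hp : 0 < ε / 2 /\ forall s, (S0 <= s)%N -> ε / 2 <= d x (u s).
    split; first lra.
    move=> s hs; have [s' [hs' h']] := Hε s.
    have := HS0 s s' hs (leq_trans hs hs'); have := dtri (u s') (u s) x.
    have := dsym x (u s); have := dsym (u s) (u s'); lra.
  exists (exist _ (x, ε/2, S0) hp); rewrite /U /=.
  have := (proj2 (dxy x x) erefl); lra.
have [l Hl] := Hc I U Hopen Hcov.
pose M := foldr (fun (q : I) acc => maxn (sval q).2 acc) 0%N l.
have [p [hin hp]] := Hl (u M).
have := foldr_max (fun q : I => (sval q).2) hin; rewrite -/M => hM.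
move: hp; rewrite /U; case: p hin hM => [[[c e] N] [he hq]] /= _ hM hp.

have := hq M hM; simpl; lra.
Qed.
Definition ball (X : Type) (d : X -> X -> R) r (c : 'I_r -> X) ρ (y : 'I_r -> X) :=
  forall i, d (c i) (y i) < ρ.
Definition Sub (X : Type) (d : X -> X -> R) r (y0 : 'I_r -> X) ρ y1 ρ1 :=
  0 < ρ1 /\ ρ1 <= ρ / 2 /\ forall y, ball d y1 (2 * ρ1) y -> ball d y0 ρ y.

Lemma single_step (X : Type) (d : X -> X -> R) (f : X -> X) n' r' (a : 'I_r'.+1 -> nat) :
  is_metric d -> metric_continuous d f -> Delta_transitive d f ->
  (forall i, (0 < a i)%N) ->
  forall (y0 : 'I_r'.+1 -> X) ρ (z : 'I_n'.+1 -> 'I_r'.+1 -> X) η N, 0 < ρ -> 0 < η ->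
  exists y1 ρ1, Sub d y0 ρ y1 ρ1 /\ forall y, ball d y1 ρ1 y ->
    exists m, (N <= m)%N /\ forall (j : 'I_n'.+1) i, d (iter (a i * (j.+1 * m)) f (y i)) (z j i) < η.
Proof.
move=> [d0 [dxy [dsym dtri]]] Hf HD Ha y0 ρ z η N hρ hη.
set A := \max_(i < r'.+1) a i.
set C := (n'.+1 * A).+1.
have hC : (0 < C)%N by [].
set Nb := (r'.+2 * C)%N.
pose wf (e : nat) : X :=
  let i := @inord r' (e %/ C).-1 in
  if (e %% C == 0)%N then y0 i else z (inord ((e %% C) %/ a i).-1) i.
have [x Hx] := HD Nb ltac:(rewrite /Nb muln_gt0 //).
set δ := Rmin (ρ / 4) (η / 2).
have hδ : 0 < δ by apply: Rmin_glb_lt; lra.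
have [t [ht Ht]] := Hx (fun k : 'I_Nb => wf k.+1) δ hδ N.
have Hw : forall e, (0 < e)%N -> (e <= Nb)%N -> d (iter (e * t) f x) (wf e) < δ.
  move=> e he1 he2.
  have hk : (e.-1 < Nb)%N by rewrite prednK.
  have := prod_dist_ge d (iter t (prod_map (fun k : 'I_Nb => k.+1) f) (diag x))
     (fun k : 'I_Nb => wf k.+1) (Ordinal hk).
  rewrite iter_prod /= prednK // /diag => h; apply: Rle_lt_trans h Ht.
pose y1 (i : 'I_r'.+1) := iter (i.+1 * C * t) f x.
have Hy1 : forall i, d (y0 i) (y1 i) < δ.
  move=> i; rewrite dsym.
  have h := Hw (i.+1 * C)%N ltac:(by []) ltac:(by rewrite /Nb leq_mul2r ltnS ltnW).
  move: h; rewrite /wf modnMl /= mulnK // /= inord_val /y1 => h.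
  exact: h.
have Hz : forall (j : 'I_n'.+1) i, d (iter (a i * (j.+1 * t)) f (y1 i)) (z j i) < η / 2.
  move=> j i.
  have hja : (j.+1 * a i < C)%N.
    rewrite ltnS; apply: leq_mul; first exact: ltn_ord.
    exact: (@leq_bigmax _ a i).
  have := Hw (i.+1 * C + j.+1 * a i)%N ltac:(by rewrite addn_gt0 muln_gt0)
    ltac:(apply: (@leq_trans (i.+2 * C)); [rewrite (mulSn i.+1) (addnC C) leq_add2l; exact: ltnW| rewrite /Nb leq_mul2r ltnS ltn_ord orbT //]).
  rewrite /wf modnMDl (modn_small hja) divnMDl // (divn_small hja) addn0 /=.
  have -> : (j.+1 * a i == 0)%N = false by rewrite muln_eq0 /= eqn0Ngt Ha.
  rewrite !inord_val mulnK // /= inord_val => h.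
  have -> : iter (a i * (j.+1 * t)) f (y1 i) = iter ((i.+1 * C + j.+1 * a i) * t) f x.
    rewrite /y1 -iterD; congr iter; lia.
  apply: Rlt_le_trans h _; apply: Rmin_r.
have [ρc [hρc Hρc]] : exists δc, 0 < δc /\ forall p : 'I_n'.+1 * 'I_r'.+1, forall y', d (y1 p.2) y' < δc ->
     d (iter (a p.2 * (p.1.+1 * t)) f (y1 p.2)) (iter (a p.2 * (p.1.+1 * t)) f y') < η / 2.
  apply: (@fin_delta _ (fun (p : 'I_n'.+1 * 'I_r'.+1) δc => forall y', d (y1 p.2) y' < δc ->
     d (iter (a p.2 * (p.1.+1 * t)) f (y1 p.2)) (iter (a p.2 * (p.1.+1 * t)) f y') < η / 2)).
    move=> p; apply: (@iter_cont _ d f (a p.2 * (p.1.+1 * t)) Hf (y1 p.2) (η / 2)); lra.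
  move=> p δa δb H1 H2 H3 y' hy'; apply: H1; lra.
exists y1, (Rmin ρc (ρ / 4)).
have hm1 := Rmin_l ρc (ρ / 4); have hm2 := Rmin_r ρc (ρ / 4).
have hm0 : 0 < Rmin ρc (ρ / 4) by apply: Rmin_glb_lt; lra.
have hδ1 := Rmin_l (ρ / 4) (η / 2); have hδ2 := Rmin_r (ρ / 4) (η / 2).
split; first split; [done| split; first lra|].
  move=> y; rewrite /ball => hy i; have := Hy1 i; have := hy i; have := dtri (y0 i) (y1 i) (y i).
  rewrite /δ; lra.
move=> y; rewrite /ball => hy; exists t; split => // j i.
have h1 := Hρc (j, i) (y i) ltac:(have := hy i; simpl; lra).
have h2 := Hz j i.
have := dtri (iter (a i * (j.+1 * t)) f (y i)) (iter (a i * (j.+1 * t)) f (y1 i)) (z j i).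
have := dsym (iter (a i * (j.+1 * t)) f (y i)) (iter (a i * (j.+1 * t)) f (y1 i)).
simpl in h1; lra.
Qed.

Lemma Sub_ball (X : Type) (d : X -> X -> R) r (y0 : 'I_r -> X) ρ y1 ρ1 y :
  Sub d y0 ρ y1 ρ1 -> ball d y1 ρ1 y -> ball d y0 ρ y.
Proof.
move=> [h1 [h2 h3]] hy; apply: h3 => i; have := hy i; lra.
Qed.

Lemma Sub_trans (X : Type) (d : X -> X -> R) r (y0 : 'I_r -> X) ρ y1 ρ1 y2 ρ2 :
  Sub d y0 ρ y1 ρ1 -> Sub d y1 ρ1 y2 ρ2 -> Sub d y0 ρ y2 ρ2.
Proof.
move=> [h1 [h2 h3]] [h4 [h5 h6]]; split => //; split; first lra.
move=> y hy; apply: h3 => i; have := h6 y hy i; lra.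
Qed.

Lemma stage (X : Type) (d : X -> X -> R) (f : X -> X) n' r' (a : 'I_r'.+1 -> nat) :
  is_metric d -> metric_compact d -> metric_continuous d f -> Delta_transitive d f ->
  (forall i, (0 < a i)%N) ->
  forall (y0 : 'I_r'.+1 -> X) ρ η N, 0 < ρ -> 0 < η ->
  exists y1 ρ1, Sub d y0 ρ y1 ρ1 /\ forall y, ball d y1 ρ1 y ->
    forall z : 'I_n'.+1 -> 'I_r'.+1 -> X,
    exists m, (N <= m)%N /\ forall (j : 'I_n'.+1) i, d (iter (a i * (j.+1 * m)) f (y i)) (z j i) < 2 * η.
Proof.
move=> Hm Hc Hf HD Ha y0 ρ η N hρ hη.
have Hm' := Hm; move: Hm' => [d0 [dxy [dsym dtri]]].
set x0 := y0 ord0.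
have [l Hl] := Hc X (fun c y => d c y < η)
  ltac:(move=> c y hy; exists (η - d c y); split; first lra;
        move=> w hw; have := dtri c y w; lra)
  ltac:(move=> x; exists x; have := proj2 (dxy x x) erefl; lra).
set k := size l.
have Hg : forall x, exists o : 'I_k, d (nth x0 l o) x < η.
  move=> x; have [c [hc1 hc2]] := Hl x; have [q [hq1 hq2]] := in_nth x0 hc1.
  by exists (Ordinal hq1); rewrite /= hq2.
pose g x := proj1_sig (constructive_indefinite_description _ (Hg x)).
have Hg' : forall x, d (nth x0 l (g x)) x < η.
  by move=> x; rewrite /g; case: constructive_indefinite_description.
pose tgt (c : {ffun 'I_n'.+1 -> {ffun 'I_r'.+1 -> 'I_k}}) : 'I_n'.+1 -> 'I_r'.+1 -> X :=
  fun j i => nth x0 l (c j i).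
have Hmulti : forall (cs : seq {ffun 'I_n'.+1 -> {ffun 'I_r'.+1 -> 'I_k}}) y0 ρ, 0 < ρ ->
  exists y1 ρ1, Sub d y0 ρ y1 ρ1 /\ forall y, ball d y1 ρ1 y ->
    forall c, c \in cs ->
    exists m, (N <= m)%N /\ forall (j : 'I_n'.+1) i, d (iter (a i * (j.+1 * m)) f (y i)) (tgt c j i) < η.
  elim=> [|c cs IH] y0' ρ' hρ'.
    exists y0', (ρ' / 2); split; first (split; [lra| split; [lra|]]).
      by move=> y hy i; have := hy i; lra.
    by [].
  have [y1 [ρ1 [hS1 hG1]]] := single_step Hm Hf HD Ha y0' (tgt c) N hρ' hη.
  have [y2 [ρ2 [hS2 hG2]]] := IH y1 ρ1 (proj1 hS1).
  exists y2, ρ2; split; first exact: Sub_trans hS1 hS2.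
  move=> y hy c'; rewrite in_cons => /orP [/eqP ->|hc].
    exact: hG1 (Sub_ball hS2 hy).
  exact: hG2.
have [y1 [ρ1 [hS hG]]] := Hmulti (enum {ffun 'I_n'.+1 -> {ffun 'I_r'.+1 -> 'I_k}}) y0 ρ hρ.
exists y1, ρ1; split => // y hy z.
pose c := [ffun j => [ffun i => g (z j i)]].
have [m [hm Hmz]] := hG y hy c ltac:(by rewrite mem_enum).
exists m; split => // j i.
have h1 := Hmz j i; have h2 := Hg' (z j i).
rewrite /tgt /c !ffunE in h1.
have := dtri (iter (a i * (j.+1 * m)) f (y i)) (nth x0 l (g (z j i))) (z j i); lra.
Qed.

Lemma inv_small ε : 0 < ε -> exists S, forall s, (S <= s)%N -> / (INR s + 1) < ε.
Proof.
move=> he.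
have [h1 _] := archimed (/ ε).
have hpos : 0 < / ε by apply: Rinv_0_lt_compat.
have h0 : (0 <= up (/ ε))%Z by apply: le_IZR; lra.
exists (Z.to_nat (up (/ ε))) => s hs.
have h2 : INR (Z.to_nat (up (/ ε))) = IZR (up (/ ε)).
  by rewrite INR_IZR_INZ Z2Nat.id.
have h3 : INR (Z.to_nat (up (/ ε))) <= INR s by apply: le_INR; apply/leP.
rewrite -(Rinv_inv ε); apply: Rinv_lt_contravar; first (apply: Rmult_lt_0_compat; [lra|]); 
  have := pos_INR s; lra.
Qed.

Lemma Sub_shrink (X : Type) (d : X -> X -> R) r (y0 : 'I_r -> X) ρ y1 ρ1 ρ' :
  Sub d y0 ρ y1 ρ1 -> 0 < ρ' -> ρ' <= ρ1 -> Sub d y0 ρ y1 ρ'.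
Proof.
move=> [h1 [h2 h3]] h4 h5; split => //; split; first lra.
move=> y hy; apply: h3 => i; have := hy i; lra.
Qed.

Theorem proposition5p3 (X : Type) (d : X -> X -> R) (f : X -> X) :
  dynamical_system d f ->
  Delta_transitive d f ->
  forall (r : nat), (0 < r)%N ->
  forall (a : 'I_r -> nat),
    (forall i, (0 < a i)%N) ->
    (forall i j : 'I_r, (i < j)%N -> (a i < a j)%N) ->
    Delta_transitive (prod_dist d) (prod_map a f).
Proof.
move=> [Hm [Hc Hf]] HD [|r'] // _ a Ha _ [|n'] // _.
have Hm' := Hm; move: Hm' => [d0 [dxy [dsym dtri]]].
have [x _] := HD 1%N erefl.
pose Y := ('I_r'.+1 -> X).
pose good (s : nat) (q : Y * R) := forall y, ball d q.1 q.2 y ->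
    forall z : 'I_n'.+1 -> 'I_r'.+1 -> X,
    exists m, (s <= m)%N /\ forall (j : 'I_n'.+1) i,
      d (iter (a i * (j.+1 * m)) f (y i)) (z j i) < 2 * / (INR s + 1).
have stepex : forall s (p : Y * R), exists q : Y * R, 0 < p.2 ->
    Sub d p.1 p.2 q.1 q.2 /\ q.2 <= / (INR s + 1) /\ good s q.
  move=> s [y0 ρ]; case: (Rlt_dec 0 ρ) => hρ; last by exists (y0, ρ).
  have hη : 0 < / (INR s + 1) by apply: Rinv_0_lt_compat; have := pos_INR s; lra.
  have [y1 [ρ1 [hS hG]]] := stage n' Hm Hc Hf HD Ha y0 s hρ hη.
  have hρ1 := proj1 hS.
  have hmin : 0 < Rmin ρ1 (/ (INR s + 1)) by apply: Rmin_glb_lt.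
  exists (y1, Rmin ρ1 (/ (INR s + 1))) => _ /=; split; last split.
  - apply: Sub_shrink hS hmin (Rmin_l _ _).
  - exact: Rmin_r.
  - move=> y hy; apply: hG => i; have := hy i; have := Rmin_l ρ1 (/ (INR s + 1)); simpl; lra.
pose step s p := proj1_sig (constructive_indefinite_description _ (stepex s p)).
have Hstep : forall s p, 0 < p.2 ->
    Sub d p.1 p.2 (step s p).1 (step s p).2 /\ (step s p).2 <= / (INR s + 1) /\ good s (step s p).
  by move=> s p; rewrite /step; case: constructive_indefinite_description.
pose fix sq (s : nat) : Y * R := if s is s'.+1 then step s' (sq s') else ((fun _ => x), 1).
have Hpos : forall s, 0 < (sq s).2.
  elim=> [|s IH] /=; first lra.
  exact: proj1 (proj1 (Hstep s _ IH)).
have Hs : forall s, Sub d (sq s).1 (sq s).2 (sq s.+1).1 (sq s.+1).2 /\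
    (sq s.+1).2 <= / (INR s + 1) /\ good s (sq s.+1).
  by move=> s; exact: Hstep s _ (Hpos s).
have Hnest : forall s k y, ball d (sq (k + s)%N).1 (sq (k + s)%N).2 y -> ball d (sq s).1 (sq s).2 y.
  move=> s; elim=> [|k IH] y hy //.
  apply: IH; apply: (Sub_ball (proj1 (Hs _))); exact: hy.
have Hself : forall t, ball d (sq t).1 (sq t).2 (sq t).1.
  move=> t i; have := proj2 (dxy ((sq t).1 i) ((sq t).1 i)) erefl; have := Hpos t; lra.
have Hle : forall s t, (s <= t)%N -> forall i, d ((sq s).1 i) ((sq t).1 i) < (sq s).2.
  move=> s t hst i; apply: (Hnest s (t - s)%N); rewrite subnK //; exact: Hself.
have Hrad : forall ε, 0 < ε -> exists S, forall s, (S <= s)%N -> (sq s).2 < ε.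
  move=> ε he; have [S HS] := inv_small he; exists S.+1 => [[|s]] // hs.
  apply: Rle_lt_trans (proj1 (proj2 (Hs s))) _; apply: HS; exact: hs.
have Hlim : forall i : 'I_r'.+1, exists L, forall ε, 0 < ε -> exists S, forall s, (S <= s)%N -> d ((sq s).1 i) L < ε.
  move=> i; apply: complete Hm Hc _ => ε he.
  have [S HS] := Hrad ε he; exists S => s t hs ht.
  case: (leqP s t) => hst.
    apply: Rlt_trans (Hle s t hst i) (HS s hs).
  rewrite dsym; apply: Rlt_trans (Hle t s (ltnW hst) i) (HS t ht).
pose ystar (i : 'I_r'.+1) := proj1_sig (constructive_indefinite_description _ (Hlim i)).
have Hystar : forall i ε, 0 < ε -> exists S, forall s, (S <= s)%N -> d ((sq s).1 i) (ystar i) < ε.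
  by move=> i; rewrite /ystar; case: constructive_indefinite_description.
have Hin : forall s, ball d (sq s).1 (sq s).2 ystar.
  move=> s; apply: (proj2 (proj2 (proj1 (Hs s)))) => i.
  have [T HT] := Hystar i (sq s.+1).2 (Hpos s.+1).
  have h1 := HT (maxn T s.+1) (leq_maxl _ _).
  have h2 := Hle s.+1 (maxn T s.+1) (leq_maxr _ _) i.
  have := dtri ((sq s.+1).1 i) ((sq (maxn T s.+1)).1 i) (ystar i); lra.
exists ystar => z ε he N.
have [S HS] := @inv_small (ε / 2) ltac:(lra).
set s := maxn S N.
have [m [hm Hmz]] := proj2 (proj2 (Hs s)) ystar (Hin s.+1) z.
exists m; split; first exact: leq_trans (leq_maxr S N) hm.
apply: prod_dist_lt => // j; rewrite iter_prod.
apply: prod_dist_lt => // i; rewrite iter_prod /diag.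
have := Hmz j i; have := HS s (leq_maxl S N); lra.
Qed.
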